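(* Let $X$ be a real Banach space. The following statements are equivalent. (1) $X$ is LUR. (2) $r(Q_{S_X}(x,\frac1n),Q_{S_X}(x',\frac1n))\to\left\|\frac{x}{\|x\|}-\frac{x'}{\|x'\|}\right\|$ as $n\to\infty$ for every $x,x'\in X\setminus\{0\}$. (3) $\mathrm{diam}(Q_{S_X}(x,\frac1n))\to0$ for every $x\in X\setminus\{0\}$. (4) For every $x\in X\setminus\{0\}$, every maximizing sequence in $S_X$ for $x$ converges to $-\frac{x}{\|x\|}$. (5) For every $x\in X\setminus\{0\}$, $Q_{S_X}(x)=\{-\frac{x}{\|x\|}\}$ and $Q_{S_X}(x,\frac1n)\xrightarrow{V}Q_{S_X}(x)$. (6) For every $x\in X\setminus\{0\}$, $Q_{S_X}(x)=\{-\frac{x}{\|x\|}\}$ and $Q_{S_X}(x,\frac1n)\xrightarrow{H}Q_{S_X}(x)$. (7) $S_X$ is SUR on $X\setminus\{0\}$.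
   Context: $B_X,S_X$ are the closed unit ball and unit sphere of $X$. For non-empty bounded $F$, $x\in X$, $\delta\ge0$: $r(F,x)=\sup_{y\in F}\|x-y\|$, $Q_F(x,\delta)=\{y\in F:\|x-y\|\ge r(F,x)-\delta\}$, $Q_F(x)=Q_F(x,0)$. A maximizing sequence in $F$ for $x$ is a sequence $(y_n)$ in $F$ with $\|x-y_n\|\to r(F,x)$. $F$ is SUR (strongly uniquely remotal) on $A$ if for every $x\in A$, $Q_F(x)$ is a singleton and for every $\epsilon>0$ there is $\delta>0$ with $Q_F(x,\delta)\subseteq Q_F(x)+\epsilon B_X$. For non-empty bounded $A,B$, $r(A,B)=\sup\{\|a-b\|:a\in A,b\in B\}$. $X$ is LUR if $x_n\to x$ whenever $x\in S_X$, $(x_n)\subseteq S_X$ and $\|\frac{x_n+x}{2}\|\to1$. For closed bounded sets $C_n,C_0$: $C_n\xrightarrow{V}C_0$ means both (a) for every open $U\supseteq C_0$, eventually $C_n\subseteq U$, and (b) for every open $U$ with $C_0\cap U\ne\emptyset$, eventually $C_n\cap U\neq\emptyset$; $C_n\xrightarrow{H}C_0$ means for every $\epsilon>0$, eventually $C_n\subseteq C_0+\epsilon B_X$ and $C_0\subseteq C_n+\epsilon B_X$. *)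

(* Defs.v *)
From HB Require Import structures.
From mathcomp Require Import all_boot all_order all_algebra.
From mathcomp Require Import all_classical all_reals all_analysis.
Set Implicit Arguments. Unset Strict Implicit. Unset Printing Implicit Defensive.
Import Order.TTheory GRing.Theory Num.Theory.
Import numFieldNormedType.Exports.
Local Open Scope classical_set_scope.
Local Open Scope ring_scope.

Section Defs.
Context {R : realType} {X : normedModType R}.

Definition sphere : set X := [set x | `|x| = 1].

Definition rad (F : set X) (x : X) : R := sup [set `|x - y| | y in F].

Definition Qset (F : set X) (x : X) (delta : R) : set X :=
  [set y | F y /\ rad F x - delta <= `|x - y|].

Definition radAB (A B : set X) : R :=
  sup [set `|a - b| | a in A & b in B].

Definition diam (A : set X) : R := radAB A A.

Definition enlarge (C : set X) (e : R) : set X :=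
  [set z | exists2 c, C c & `|z - c| <= e].

Definition LUR : Prop :=
  forall (x : X) (xn : nat -> X), `|x| = 1 -> (forall n, `|xn n| = 1) ->
    (fun n => `|(2 : R)^-1 *: (xn n + x)|) @ \oo --> (1 : R) ->
    xn @ \oo --> x.

Definition maximizing_seq (F : set X) (x : X) (y : nat -> X) : Prop :=
  (forall n, F (y n)) /\ (fun n => `|x - y n|) @ \oo --> rad F x.

Definition SUR_on (F A : set X) : Prop :=
  forall x, A x ->
    (exists y, Qset F x 0 = [set y]) /\
    (forall e : R, 0 < e -> exists2 d : R, 0 < d &
        Qset F x d `<=` enlarge (Qset F x 0) e).

Definition V_conv (C : nat -> set X) (C0 : set X) : Prop :=
  (forall U : set X, open U -> C0 `<=` U -> \forall n \near \oo, C n `<=` U) /\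
  (forall U : set X, open U -> C0 `&` U !=set0 ->
      \forall n \near \oo, C n `&` U !=set0).

Definition H_conv (C : nat -> set X) (C0 : set X) : Prop :=
  forall e : R, 0 < e -> \forall n \near \oo,
    C n `<=` enlarge C0 e /\ C0 `<=` enlarge (C n) e.

End Defs.

(* Main.v *)
Require Import Defs.
From HB Require Import structures.
From mathcomp Require Import all_boot all_order all_algebra.
From mathcomp Require Import all_classical all_reals all_analysis.
Import Order.TTheory GRing.Theory Num.Theory.
Import numFieldNormedType.Exports.
From mathcomp Require Import lra.
Local Open Scope classical_set_scope.
Local Open Scope ring_scope.

Section S.
Context {R : realType} {X : normedModType R}.

Definition ww (x : X) : X := - (`|x|^-1 *: x).

Lemma nuv (x : X) : x != 0 -> `| `|x|^-1 *: x| = 1.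
Proof.
move=> x0; rewrite normrZ normfV normr_id mulVf //.
by rewrite normr_eq0.
Qed.

Lemma ww_sph (x : X) : x != 0 -> `|ww x| = 1.
Proof. by move=> x0; rewrite /ww normrN nuv. Qed.

Lemma xww (x : X) : x != 0 -> `|x - ww x| = `|x| + 1.
Proof.
move=> x0; rewrite /ww opprK.
have -> : x + `|x|^-1 *: x = (1 + `|x|^-1) *: x by rewrite scalerDl scale1r.
rewrite normrZ ger0_norm; last by rewrite addr_ge0 // invr_ge0.
by rewrite mulrDl mul1r mulVf // normr_eq0.
Qed.

Lemma supE0 (E : set R) x0 : E x0 -> ubound E x0 -> sup E = x0.
Proof.
move=> Ex ub; apply/le_anti/andP; split; first by apply: ge_sup => //; exists x0.
by apply: sup_upper_bound => //; split; exists x0.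
Qed.

Lemma rad_sph (x : X) : x != 0 -> Defs.rad sphere x = `|x| + 1.
Proof.
move=> x0; rewrite /rad; apply: supE0.
  by exists (ww x); [exact: ww_sph | exact: xww].
move=> _ [y /= y1 <-]; rewrite -y1; exact: ler_normB.
Qed.

Lemma wwQ (x : X) d : x != 0 -> 0 <= d -> Qset sphere x d (ww x).
Proof.
move=> x0 d0; split; first exact: ww_sph.
by rewrite rad_sph // xww // lerBlDr lerDl.
Qed.

Lemma Qmono (F : set X) x d d' : d <= d' -> Qset F x d `<=` Qset F x d'.
Proof. by move=> dd y [Fy H]; split => //; apply: le_trans H; rewrite lerB. Qed.

Lemma keyineq (x y : X) : x != 0 -> `|y| = 1 ->
  Num.min 1 `|x| * (2 - `|y + ww x|) <= `|x| + 1 - `|x - y|.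
Proof.
move=> x0 y1; set a := `|x|; set u := `|x|^-1 *: x.
have u1 : `|u| = 1 by exact: nuv.
have xE : x = a *: u by rewrite /u scalerA mulfV ?scale1r // normr_eq0.
have -> : y + ww x = y - u by [].
rewrite xE.
have a0 : 0 <= a by rewrite /a normr_ge0.
have dC : `|u - y| = `|y - u| by rewrite distrC.
case: (leP 1 a) => a1.
  rewrite mul1r.
  have -> : a *: u - y = (a - 1) *: u + (u - y) by rewrite scalerBl scale1r addrA subrK.
  have := ler_normD ((a - 1) *: u) (u - y).
  rewrite normrZ u1 mulr1 ger0_norm ?subr_ge0 // dC => h; lra.

have -> : a *: u - y = a *: (u - y) - (1 - a) *: y.
  by rewrite scalerBr scalerBl scale1r opprB addrA subrK.
have := ler_normB (a *: (u - y)) ((1 - a) *: y).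
have a1' : 0 <= 1 - a by rewrite subr_ge0 ltW.
rewrite !normrZ y1 mulr1 (ger0_norm a0) (ger0_norm a1') => h.
rewrite -dC.
nra.
Qed.

Lemma natSinv_near (d : R) : 0 < d -> \forall n \near \oo, n.+1%:R^-1 <= d.
Proof.
move=> d0; have := near_infty_natSinv_lt (PosNum d0).
by apply: filterS => n /ltW.
Qed.

Lemma LUR_at : @LUR R X -> forall u : X, `|u| = 1 -> forall e : R, 0 < e ->
  exists2 d : R, 0 < d & forall y : X, `|y| = 1 -> 2 - d <= `|y + u| -> `|y - u| <= e.
Proof.
move=> L u u1 e e0.
case: (pselect (exists2 d : R, 0 < d & forall y : X, `|y| = 1 -> 2 - d <= `|y + u| -> `|y - u| <= e)) => // nH.
have H : forall n : nat, exists y : X, `|y| = 1 /\ 2 - n.+1%:R^-1 <= `|y + u| /\ e < `|y - u|.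
  move=> n; apply: contra_notP nH => nE.
  exists n.+1%:R^-1; first by rewrite invr_gt0 ltr0n.
  move=> y y1 hy; rewrite leNgt; apply/negP => ey; apply: nE; exists y; split=> //.
have [yn Hy] := choice H.
have := L u yn u1 (fun n => (Hy n).1).
have : (fun n => `|2^-1 *: (yn n + u)|) @ \oo --> (1:R).
  apply/cvgrPdist_le => eps eps0.
  near=> n.
  have [y1 [h1 h2]] := Hy n.
  have hv := ler_normD (yn n) u; rewrite y1 u1 in hv.
  have hn : n.+1%:R^-1 <= eps by near: n; apply: natSinv_near.
  rewrite normrZ (@ger0_norm _ 2^-1) ?invr_ge0 ?ler0n //.
  have hk : (2:R)^-1 * 2 = 1 by rewrite mulVf.
  have hk0 : (0:R) < 2^-1 by rewrite invr_gt0.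
  have ht : (0:R) <= n.+1%:R^-1 by rewrite invr_ge0.
  move: (2:R)^-1 hk hk0 => k hk hk0.
  move: (n.+1%:R^-1 : R) ht h1 hn => t ht h1 hn.
  rewrite ger0_norm; nra.
move=> Hf /(_ Hf) /cvgrPdist_le /(_ e e0) [N _ HN].
have := HN N (leqnn N); have [_ [_ h3]] := Hy N.
rewrite distrC => h; lra.
Unshelve. all: by end_near.
Qed.

Lemma LUR_Kd : @LUR R X -> forall x : X, x != 0 -> forall e : R, 0 < e ->
  exists2 d : R, 0 < d & forall y, Qset sphere x d y -> `|y - ww x| <= e.
Proof.
move=> L x x0 e e0.
have [d d0 Hd] := @LUR_at L _ (ww_sph x x0) _ e0.
have m0 : 0 < Num.min 1 `|x| by rewrite lt_min ltr01 normr_gt0.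
exists (Num.min 1 `|x| * d); first exact: mulr_gt0.
move=> y [y1 hy]; apply: Hd => //.
have := keyineq x y x0 y1; rewrite rad_sph // in hy.
move: (Num.min 1 `|x|) m0 hy => m m0 hy h.
nra.
Qed.

Lemma Kd_LUR : (forall x : X, x != 0 -> forall e : R, 0 < e ->
  exists2 d : R, 0 < d & forall y, Qset sphere x d y -> `|y - ww x| <= e) -> @LUR R X.
Proof.
move=> K u xn u1 xn1 hc.
have u0 : -u != 0 by rewrite oppr_eq0 -normr_eq0 u1 oner_neq0.
have wE : ww (-u) = u by rewrite /ww normrN u1 invr1 scale1r opprK.
apply/cvgrPdist_le => e e0.
have [d d0 Hd] := K _ u0 e e0.
move/cvgrPdist_le: hc => /(_ (2^-1 * d)) hc.
have : \forall n \near \oo, `|1 - `|2^-1 *: (xn n + u)| | <= 2^-1 * d.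
  by apply: hc; rewrite mulr_gt0 // invr_gt0.
apply: filterS => n hn; rewrite distrC -wE; apply: Hd; split; first exact: xn1.
rewrite rad_sph // normrN u1 -opprD normrN (addrC u).
rewrite normrZ (@ger0_norm _ 2^-1) ?invr_ge0 ?ler0n // in hn.
have := ler_norm (1 - 2^-1 * `|xn n + u|).
have hk : (2:R)^-1 * 2 = 1 by rewrite mulVf.
move: (2:R)^-1 hk hn => k hk hn; nra.
Qed.

Lemma radAB_ub (A B : set X) a b : A `<=` sphere -> B `<=` sphere -> A a -> B b ->
  `|a - b| <= radAB A B.
Proof.
move=> hA hB Aa Bb; apply: sup_upper_bound; last by exists a => //; exists b.
split; first by exists `|a - b|; exists a => //; exists b.
exists 2 => _ [a' Aa' [b' Bb' <-]]; have := ler_normB a' b'.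
by rewrite (hA _ Aa') (hB _ Bb').
Qed.

Lemma radAB_le (A B : set X) (M : R) : A !=set0 -> B !=set0 ->
  (forall a b, A a -> B b -> `|a - b| <= M) -> radAB A B <= M.
Proof.
move=> [a Aa] [b Bb] H; apply: ge_sup; first by exists `|a - b|; exists a => //; exists b.
by move=> _ [a' Aa' [b' Bb' <-]]; apply: H.
Qed.

Definition Kd (x : X) := forall e : R, 0 < e ->
  exists2 d : R, 0 < d & forall y, Qset sphere x d y -> `|y - ww x| <= e.

Lemma Kd_near x : Kd x -> forall e : R, 0 < e ->
  \forall n \near \oo, forall y, Qset sphere x (n.+1%:R^-1) y -> `|y - ww x| <= e.
Proof.
move=> K e e0; have [d d0 Hd] := K e e0; have := natSinv_near _ d0.
by apply: filterS => n hn y hy; apply: Hd; exact: Qmono hn _ hy.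
Qed.

Lemma Kd_Q0 x : x != 0 -> Kd x -> Qset sphere x 0 = [set ww x].
Proof.
move=> x0 K; apply/seteqP; split=> [y hy|y ->]; last exact: wwQ.
rewrite /=; apply/eqP; rewrite -subr_eq0 -normr_eq0; apply/eqP/le_anti.
rewrite normr_ge0 andbT; apply/ler_addgt0Pr => e e0; rewrite add0r.
have [d d0 Hd] := K e e0; apply: Hd; exact: Qmono (ltW d0) _ hy.
Qed.

Lemma D3_Kd : (forall x : X, x != 0 ->
    (fun n : nat => diam (Qset sphere x (n.+1%:R)^-1)) @ \oo --> (0 : R)) ->
  forall x : X, x != 0 -> Kd x.
Proof.
move=> H x x0 e e0; have := H x x0; move/cvgrPdist_le/(_ e e0) => [N _ HN].
have := HN N (leqnn N); rewrite sub0r normrN => hd.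
exists N.+1%:R^-1; first by rewrite invr_gt0 ltr0n.
move=> y hy; apply: le_trans hd; apply: le_trans (ler_norm _).
apply: radAB_ub => //; [by move=> z []| by move=> z []| exact: wwQ].
Qed.

Lemma Kd_4 x : x != 0 -> Kd x -> forall y : nat -> X,
  maximizing_seq sphere x y -> y @ \oo --> - (`|x|^-1 *: x).
Proof.
move=> x0 K y [ys hy]; apply/cvgrPdist_le => e e0.
have [d d0 Hd] := K e e0.
move/cvgrPdist_le: hy => /(_ d d0); apply: filterS => n hn.
rewrite distrC; apply: Hd; split => //.
have := ler_norm (Defs.rad sphere x - `|x - y n|); lra.
Qed.

Lemma M4_LUR : (forall x : X, x != 0 -> forall y : nat -> X,
  maximizing_seq sphere x y -> y @ \oo --> - (`|x|^-1 *: x)) -> @LUR R X.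
Proof.
move=> H u xn u1 xn1 hc.
have u0 : -u != 0 by rewrite oppr_eq0 -normr_eq0 u1 oner_neq0.
have wE : - (`|-u|^-1 *: -u) = u by rewrite normrN u1 invr1 scale1r opprK.
rewrite -wE; apply: H => //; split; first exact: xn1.
rewrite rad_sph // normrN u1; apply/cvgrPdist_le => e e0.
move/cvgrPdist_le: hc => /(_ (2^-1 * e)) hc.
have : \forall n \near \oo, `|1 - `|2^-1 *: (xn n + u)| | <= 2^-1 * e.
  by apply: hc; rewrite mulr_gt0 // invr_gt0.
apply: filterS => n hn.
rewrite -opprD normrN (addrC u).
rewrite normrZ (@ger0_norm _ 2^-1) ?invr_ge0 ?ler0n // in hn.
have hk : (2:R)^-1 * 2 = 1 by rewrite mulVf.
have hk0 : (0:R) < 2^-1 by rewrite invr_gt0.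
move: hn; rewrite !ler_norml => /andP[h1 h2]; apply/andP; split.
  move: (2:R)^-1 hk hk0 h1 h2 => k hk hk0 h1 h2; nra.
move: (2:R)^-1 hk hk0 h1 h2 => k hk hk0 h1 h2; nra.
Qed.

Lemma Kd_5 x : x != 0 -> Kd x ->
  Qset sphere x 0 = [set - (`|x|^-1 *: x)] /\
  V_conv (fun n : nat => Qset sphere x (n.+1%:R)^-1) (Qset sphere x 0).
Proof.
move=> x0 K; have Q0 := Kd_Q0 x x0 K; split => //; rewrite Q0; split.
  move=> U oU sub; have Uw : U (ww x) by exact: sub.
  have /nbhs_ballP [e e0 be] := open_nbhs_nbhs (conj oU Uw).
  have e20 : 0 < e / 2 by rewrite divr_gt0.
  have := Kd_near x K _ e20; apply: filterS => n hn y hy; apply: be.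
  rewrite -ball_normE /ball_ /= distrC; apply: le_lt_trans (hn y hy) _.
  by rewrite ltr_pdivrMr // ltr_pMr // ltr1n.
move=> U oU [z [-> Uz]]; apply: nearW => n; exists (ww x); split => //.
by apply: wwQ => //; rewrite invr_ge0.
Qed.

Lemma V5_Kd x : x != 0 -> Qset sphere x 0 = [set - (`|x|^-1 *: x)] /\
  V_conv (fun n : nat => Qset sphere x (n.+1%:R)^-1) (Qset sphere x 0) -> Kd x.
Proof.
move=> x0 [Q0 [Va _]] e e0.
have := Va (ball (ww x) e) (@ball_open _ _ _ _).
rewrite Q0 => /(_ _) [].
  by move=> y ->; exact: ballxx.
move=> N _ HN; exists N.+1%:R^-1; first by rewrite invr_gt0 ltr0n.
move=> y hy; have := HN N (leqnn N) y hy.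
rewrite -ball_normE /ball_ /= distrC => h; exact: ltW.
Qed.

Lemma Kd_6 x : x != 0 -> Kd x ->
  Qset sphere x 0 = [set - (`|x|^-1 *: x)] /\
  H_conv (fun n : nat => Qset sphere x (n.+1%:R)^-1) (Qset sphere x 0).
Proof.
move=> x0 K; have Q0 := Kd_Q0 x x0 K; split => //.
move=> e e0; have := Kd_near x K _ e0; apply: filterS => n hn; split.
  by move=> y hy; exists (ww x); [exact: wwQ | exact: hn].
move=> y; rewrite Q0 => ->; exists (ww x); first by apply: wwQ => //; rewrite invr_ge0.
by rewrite subrr normr0 ltW.
Qed.

Lemma H6_Kd x : x != 0 -> Qset sphere x 0 = [set - (`|x|^-1 *: x)] /\
  H_conv (fun n : nat => Qset sphere x (n.+1%:R)^-1) (Qset sphere x 0) -> Kd x.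
Proof.
move=> x0 [Q0 Hc] e e0; have [N _ HN] := Hc e e0.
have [h1 _] := HN N (leqnn N).
exists N.+1%:R^-1; first by rewrite invr_gt0 ltr0n.
move=> y hy; have [c Qc hc] := h1 y hy; rewrite Q0 in Qc.
by rewrite Qc in hc.
Qed.

Lemma Kd_7 : (forall x : X, x != 0 -> Kd x) -> SUR_on (@sphere R X) [set x : X | x != 0].
Proof.
move=> K x x0; split; first by exists (ww x); exact: Kd_Q0 x x0 (K x x0).
move=> e e0; have [d d0 Hd] := K x x0 e e0; exists d => // y hy.
by exists (ww x); [exact: wwQ | exact: Hd].
Qed.

Lemma S7_Kd : SUR_on (@sphere R X) [set x : X | x != 0] -> forall x : X, x != 0 -> Kd x.
Proof.
move=> S x x0; have [[y0 Q0] H] := S x x0.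
have : Qset sphere x 0 (ww x) by exact: wwQ.
rewrite Q0 => wy e e0; have [d d0 Hd] := H e e0; exists d => // y hy.
have [c Qc hc] := Hd y hy; rewrite Q0 in Qc.
by rewrite wy -Qc.
Qed.

End S.
Theorem theorem3p7 (R : realType) (X : completeNormedModType R) :
  [<-> (* (1) *) @LUR R X;
       (* (2) *) forall x x' : X, x != 0 -> x' != 0 ->
         (fun n : nat => radAB (Qset sphere x (n.+1%:R)^-1)
                               (Qset sphere x' (n.+1%:R)^-1))
           @ \oo --> `| `|x|^-1 *: x - `|x'|^-1 *: x'|;
       (* (3) *) forall x : X, x != 0 ->
         (fun n : nat => diam (Qset sphere x (n.+1%:R)^-1)) @ \oo --> (0 : R);
       (* (4) *) forall x : X, x != 0 -> forall y : nat -> X,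
         maximizing_seq sphere x y -> y @ \oo --> - (`|x|^-1 *: x);
       (* (5) *) forall x : X, x != 0 ->
         Qset sphere x 0 = [set - (`|x|^-1 *: x)] /\
         V_conv (fun n : nat => Qset sphere x (n.+1%:R)^-1) (Qset sphere x 0);
       (* (6) *) forall x : X, x != 0 ->
         Qset sphere x 0 = [set - (`|x|^-1 *: x)] /\
         H_conv (fun n : nat => Qset sphere x (n.+1%:R)^-1) (Qset sphere x 0);
       (* (7) *) SUR_on (@sphere R X) [set x : X | x != 0]].
Proof.
tfae.
- move=> L x x' x0 x'0; apply/cvgrPdist_le => e e0.
  have e20 : 0 < e / 2 by rewrite divr_gt0.
  have K1 := Kd_near x (LUR_Kd L x x0) _ e20.
  have K2 := Kd_near x' (LUR_Kd L x' x'0) _ e20.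
  near=> n.
  have h1 : forall y : X, Qset sphere x n.+1%:R^-1 y -> `|y - ww x| <= e / 2.
    by near: n; exact: K1.
  have h2 : forall y : X, Qset sphere x' n.+1%:R^-1 y -> `|y - ww x'| <= e / 2.
    by near: n; exact: K2.
  have LE : `| `|x|^-1 *: x - `|x'|^-1 *: x'| = `|ww x - ww x'|.
    by rewrite /ww -opprD normrN.
  rewrite LE.
  have np : (0:R) <= n.+1%:R^-1 by rewrite invr_ge0.
  have sQ : forall (z : X) d, Qset sphere z d `<=` sphere by move=> z d y [].
  have lo := radAB_ub _ _ _ _ (sQ x _) (sQ x' _) (wwQ x _ x0 np) (wwQ x' _ x'0 np).
  have hi : radAB (Qset sphere x n.+1%:R^-1) (Qset sphere x' n.+1%:R^-1)
      <= `|ww x - ww x'| + e.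
    apply: radAB_le; [by exists (ww x); exact: wwQ|by exists (ww x'); exact: wwQ|].
    move=> a b ha hb.
    have ha' := h1 _ ha; have hb' := h2 _ hb; rewrite distrC in hb'.
    have -> : a - b = (a - ww x) + (ww x - ww x') + (ww x' - b).
      by rewrite !addrA subrK subrK.
    apply: le_trans (ler_normD _ _) _; apply: le_trans (lerD (ler_normD _ _) (lexx _)) _.
    have : e / 2 + e / 2 = e by rewrite -splitr.
    lra.
  rewrite ler_norml; apply/andP; split; lra.
- move=> H x x0; have := H x x x0 x0; by rewrite subrr normr0.
- by move=> H x x0; apply: Kd_4 => //; exact: D3_Kd.
- by move=> H x x0; apply: Kd_5 => //; exact: LUR_Kd (M4_LUR H) x x0.
- by move=> H x x0; apply: Kd_6 => //; exact: V5_Kd x x0 (H x x0).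
- by move=> H; apply: Kd_7 => x x0; exact: H6_Kd x x0 (H x x0).
- by move=> H; apply: Kd_LUR => x x0; exact: S7_Kd.
Unshelve. all: by end_near.
Qed.
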